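(* Let $k\ge 1$ and $n=2^{k+1}-1$, and let $\Delta=3$, so that $T_{n,3}$ is the complete binary tree of height $k$ with all levels full. Then in every execution of the traversal procedure on $T_{n,3}$, the number of jump edges added in step (c) (not counting the final closing edge $\{v_n,1\}$) is the same, namely $$\sum_{i=0}^{k-1} f(i)+k=\frac{f(k+1)}{2}=\Bigl\lfloor \frac{n}{3}\Bigr\rfloor,$$ where $f$ is the function defined by $f(0)=0$ and $f(m)=2(m-1)+2\sum_{i=0}^{m-2}f(i)$ for $m\ge 1$.
   Context: Fix integers $\Delta\ge 3$ and $n\ge 3$, and put $b=\Delta-1$. The complete $\Delta$-ary tree $T_{n,\Delta}$ is the rooted tree on vertex set $\{1,\dots,n\}$ with root $1$ in which the children of a vertex $i$ are the integers $j$ with $b(i-1)+2\le j\le bi+1$ and $j\le n$ (equivalently, the parent of $j\ge 2$ is $\lfloor (j-2)/b\rfloor+1$). Thus every vertex has at most $\Delta-1$ children, all levels except possibly the last are full, and the last level is filled from the left. A leaf is a vertex other than the root having no children. Traversal procedure: start with edge set $E$ equal to the edge set of $T_{n,\Delta}$, all vertices unmarked, and $v_1=1$. For $k=1,\dots,n-1$: mark $v_k$; then (a) if $v_k\neq 1$ and the parent of $v_k$ is unmarked, let $v_{k+1}$ be the parent of $v_k$; (b) otherwise, if $v_k$ has an unmarked child, let $v_{k+1}$ be any unmarked child of $v_k$; (c) otherwise, let $v_{k+1}$ be any unmarked leaf $u$ and add the edge $\{v_k,u\}$ to $E$ (a ''jump edge''). Finally mark $v_n$ and add the edge $\{v_n,1\}$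 to $E$ (if not already present). The output is the simple graph $G=(\{1,\dots,n\},E)$. An execution is any run of this procedure, i.e. any admissible sequence of choices in (b) and (c). *)

(* Defs.v *)
From mathcomp Require Import all_boot.
Set Implicit Arguments. Unset Strict Implicit. Unset Printing Implicit Defensive.

(* Complete Delta-ary tree T_{n,Delta} on vertex set {1,...,n}, root 1,
   b = Delta - 1. *)
Definition branch (Delta : nat) : nat := Delta - 1.

Definition parent (Delta j : nat) : nat := (j - 2) %/ branch Delta + 1.

Definition is_vertex (n v : nat) : bool := (1 <= v <= n).

Definition is_child (Delta n i j : nat) : bool :=
  [&& branch Delta * (i - 1) + 2 <= j, j <= branch Delta * i + 1 & j <= n].

Definition is_leaf (Delta n v : nat) : bool :=
  [&& is_vertex n v, v != 1 & ~~ has (is_child Delta n v) (iota 1 n)].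

(* Case (a) applies at current vertex v with marked set `marked`
   (marked already contains v). *)
Definition case_a (Delta : nat) (marked : seq nat) (v : nat) : bool :=
  (v != 1) && (parent Delta v \notin marked).

Definition has_unmarked_child (Delta n : nat) (marked : seq nat) (v : nat) : bool :=
  has (fun c => is_child Delta n v c && (c \notin marked)) (iota 1 n).

Definition step_ok (Delta n : nat) (marked : seq nat) (v w : nat) : bool :=
  if case_a Delta marked v then w == parent Delta v
  else if has_unmarked_child Delta n marked v then
    is_child Delta n v w && (w \notin marked)
  else is_leaf Delta n w && (w \notin marked).

Definition is_jump_step (Delta n : nat) (marked : seq nat) (v : nat) : bool :=
  ~~ case_a Delta marked v && ~~ has_unmarked_child Delta n marked v.

(* An execution is the visiting sequence vs = [:: v_1; ...; v_n]
   (0-indexed: nth 0 vs k = v_{k+1}).  At step k+1 (0-indexed k < n-1)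
   the marked vertices are v_1..v_{k+1} = take k.+1 vs. *)
Definition is_execution (Delta n : nat) (vs : seq nat) : Prop :=
  [/\ size vs = n, nth 0 vs 0 = 1 &
      forall k, k < n.-1 ->
        step_ok Delta n (take k.+1 vs) (nth 0 vs k) (nth 0 vs k.+1)].

Definition num_jumps (Delta n : nat) (vs : seq nat) : nat :=
  count (fun k => is_jump_step Delta n (take k.+1 vs) (nth 0 vs k)) (iota 0 n.-1).

(* Main.v *)
Require Import Defs.
From mathcomp Require Import all_boot zify.
Set Implicit Arguments. Unset Strict Implicit. Unset Printing Implicit Defensive.

Lemma sum_ind (G : nat -> nat) y a m :
  \sum_(x <- iota a m) (if x == y then G x else 0) = if a <= y < a + m then G y else 0.
Proof.
elim: m a => [|m IH] a; first by rewrite big_nil; case: ifP => //; lia.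
rewrite /= big_cons IH.
case: eqP => [<-|ne]; case: ifP; case: ifP => //; try lia; by rewrite addn0.
Qed.

Lemma parent3 j : 2 <= j -> parent 3 j = j %/ 2.
Proof. rewrite /parent /branch /=; lia. Qed.

Lemma child3 n i j : 1 <= i -> is_child 3 n i j = [&& 2 * i <= j, j <= 2 * i + 1 & j <= n].
Proof.
move=> hi; rewrite /is_child /branch /=.
have -> : 2 * (i - 1) + 2 = 2 * i by lia.
by rewrite addn1.
Qed.
Fixpoint Qf m := if m is m'.+1 then 2 * Qf m' + ~~ odd m' else 0.
Definition Df m : nat := ~~ odd m.
Definition Pf m := Qf m + Df m.

Lemma DfS m : Df m.+1 + Df m = 1.
Proof. by rewrite /Df /=; case: (odd m). Qed.
Lemma Df0 : Df 0 = 1. Proof. by []. Qed.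
Lemma QfS m : Qf m.+1 = Qf m + Pf m.
Proof. rewrite /Pf /= /Df; lia. Qed.
Lemma PfS m : Pf m.+1 = 2 * Qf m + 1.
Proof. have := DfS m; rewrite /Pf /=; rewrite /Df; lia. Qed.
Lemma PfE m : Pf m = Qf m + Df m. Proof. by []. Qed.

Lemma Pf_gt0 m : 0 < Pf m.
Proof. case: m => [|m] //; rewrite PfS; lia. Qed.

Section S.
Variables k n : nat.
Hypothesis hk : 1 <= k.
Hypothesis hn : n = 2 ^ k.+1 - 1.

Definition ht x := k - trunc_log 2 x.

Lemma ht_child w : 1 <= w -> ht (2*w) = (ht w).-1 /\ ht (2*w+1) = (ht w).-1.
Proof.
move=> hw; rewrite /ht; split.
  by rewrite mul2n trunc_log2_double //; lia.
rewrite trunc_log2S; last lia.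
have -> : (2 * w + 1)./2 = w by rewrite -divn2; lia.
lia.
Qed.

Lemma ht_pos w : 1 <= w -> (0 < ht w) = (2*w <= n).
Proof.
move=> hw; rewrite /ht hn expnS.
have e : (0 < k - trunc_log 2 w) = (w < 2 ^ k).
  apply/idP/idP => h.
    have := trunc_log_ltn w (isT : 1 < 2).
    have : 2 ^ (trunc_log 2 w).+1 <= 2 ^ k by rewrite leq_exp2l //; lia.
    lia.
  have := trunc_logP (isT : 1 < 2) hw => h2.
  have : 2 ^ trunc_log 2 w < 2 ^ k by lia.
  rewrite ltn_exp2l //; lia.
rewrite e; have h3 : 1 <= 2 ^ k by rewrite expn_gt0.
apply/idP/idP; lia.
Qed.

Definition topv (M : seq nat) x := if (x \notin M) && (x %/ 2 \in M) then Pf (ht x) else 0.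
Definition SP M := \sum_(x <- iota 2 n.-1) topv M x.
Definition chv (M : seq nat) x := if (x <= n) && (x \notin M) then Pf (ht x) else 0.

Lemma SP_update M w : 1 <= w <= n -> w \notin M -> 0 \notin M ->
  SP (rcons M w) + topv M w = SP M + chv (rcons M w) (2 * w) + chv (rcons M w) (2 * w + 1).
Proof.
move=> hw wM M0.
have -> : topv M w = \sum_(x <- iota 2 n.-1) (if x == w then topv M x else 0).
  rewrite sum_ind; case: ifP => // h.
  have -> : w = 1 by lia.
  by rewrite /topv /= (negbTE M0) andbF.
have -> : chv (rcons M w) (2 * w) = \sum_(x <- iota 2 n.-1) (if x == 2 * w then chv (rcons M w) x else 0).
  rewrite sum_ind; case: ifP => // h; rewrite /chv; case: ifP => //; lia.
have -> : chv (rcons M w) (2 * w + 1) = \sum_(x <- iota 2 n.-1) (if x == 2 * w + 1 then chv (rcons M w) x else 0).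
  rewrite sum_ind; case: ifP => // h; rewrite /chv; case: ifP => //; lia.
rewrite /SP -!big_split /=; apply: eq_big_seq => x hx.
rewrite /topv /chv !mem_rcons !in_cons.
case: (eqVneq x w) => [->|xw].
  have -> : (w == 2 * w) = false by lia.
  have -> : (w == 2 * w + 1) = false by lia.
  by rewrite /= add0n !addn0.
rewrite /=.
case: (eqVneq (x %/ 2) w) => [xh|xh].
  rewrite (_ : (x %/ 2 \in M) = false); last by rewrite xh (negbTE wM).
  have xn : x <= n by move: hx; rewrite mem_iota; lia.
  rewrite xn /=.
  have [-> | ->] : x = 2 * w \/ x = 2 * w + 1 by lia.
    have -> : (2 * w == 2 * w + 1) = false by lia.
    by rewrite eqxx andbT andbF /= add0n !addn0.
  rewrite andbT andbF /= add0n addn0.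
  case: eqP => [?|_]; first lia.
  by rewrite eqxx add0n.
have -> : (x == 2 * w) = false by lia.
have -> : (x == 2 * w + 1) = false by lia.
by rewrite !addn0.
Qed.


Lemma n_odd v : (2 * v <= n) = (2 * v + 1 <= n).
Proof. rewrite hn expnS; have : 1 <= 2 ^ k by rewrite expn_gt0. move=> ?; apply/idP/idP; lia. Qed.

Lemma huc_iff M v : 1 <= v -> has_unmarked_child 3 n M v =
  ((2 * v <= n) && (2 * v \notin M)) || ((2 * v + 1 <= n) && (2 * v + 1 \notin M)).
Proof.
move=> hv; apply/hasP/orP.
  move=> [c]; rewrite mem_iota child3 //; move=> _ /andP [/and3P [h1 h2 h3] cM].
  have [e|e] : c = 2 * v \/ c = 2 * v + 1 by lia.
    by left; rewrite -e h3.
  by right; rewrite -e h3.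
move=> [/andP [h1 h2]|/andP [h1 h2]].
  exists (2 * v); first by rewrite mem_iota; lia.
  by rewrite child3 // h2 h1 leqnn /=; lia.
exists (2 * v + 1); first by rewrite mem_iota; lia.
by rewrite child3 // h2 h1 leqnn /= andbT; lia.
Qed.

Definition cval M v := if case_a 3 M v then (Qf (ht v)).+1
  else if has_unmarked_child 3 n M v then Df (ht v).-1 else 0.
Definition I2 (M : seq nat) v := forall y, y \in M -> y != 1 -> y != v -> parent 3 y \in M.


Lemma case_aE M v : 2 <= v -> case_a 3 M v = (v %/ 2 \notin M).
Proof. by move=> hv; rewrite /case_a parent3 //; have -> : (v != 1) by lia. Qed.

Lemma step M v w :
  1 \in M -> v \in M -> (forall y, y \in M -> 1 <= y <= n) -> I2 M v ->
  step_ok 3 n M v w ->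
  [/\ w \notin M, 1 <= w <= n, I2 (rcons M w) w &
   SP (rcons M w) + is_jump_step 3 n M v + cval M v = SP M + cval (rcons M w) w].
Proof.
move=> h1 hvM hM hI.
have M0 : 0 \notin M by apply/negP => /hM; lia.
have /andP [v1 vn] := hM _ hvM.
rewrite /step_ok /is_jump_step /cval.
case ca: (case_a 3 M v).
-
  move=> /eqP ->.
  have v2 : 2 <= v by move: ca; rewrite /case_a; case: eqP => //=; lia.
  move: ca; rewrite parent3 // case_aE //.
  set p := v %/ 2 => pM.
  have p1 : 1 <= p <= n by rewrite /p; lia.
  have p2 : 2 <= p.
    case: (ltnP 1 p) => // hp; have e : p = 1 by lia.
    by move: pM; rewrite e h1.
  have hIp : I2 (rcons M p) p.
    move=> y; rewrite mem_rcons in_cons; case/orP => [/eqP ->|yM y1 yp]; first by move=> _; rewrite eqxx.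
    rewrite mem_rcons in_cons; case: (eqVneq y v) => [->|yv]; first by rewrite parent3 // eqxx.
    by rewrite hI ?orbT.
  split => //.
  have hp1 : 1 <= p by lia.
  have [hc1 hc2] := ht_child hp1.
  have hp0 : 0 < ht p by rewrite ht_pos; lia.
  have hv : ht v = (ht p).-1.
    have [e|e] : v = 2 * p \/ v = 2 * p + 1 by rewrite /p; lia.
      by rewrite {1}e.
    by rewrite {1}e.
  have hch : chv (rcons M p) (2 * p) + chv (rcons M p) (2 * p + 1) = Pf (ht v).
    have hs : forall s, s \in M -> 2 <= s -> s %/ 2 = p -> s = v.
      move=> s sM s2 sp; apply/eqP; apply/negPn/negP => sv.
      have s1 : s != 1 by lia.
      by move: (hI _ sM s1 sv); rewrite parent3 // sp (negbTE pM).
    have ne1 : (2 * p == p) = false by lia.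
    have ne2 : (2 * p + 1 == p) = false by lia.
    rewrite /chv !mem_rcons !in_cons ne1 ne2 /= hc1 hc2 -hv.
    have [e|e] : v = 2 * p \/ v = 2 * p + 1 by rewrite /p; lia.
      have -> : (2 * p \in M) = true by rewrite -e.
      case sM: (2 * p + 1 \in M); first by have := hs _ sM; lia.
      rewrite -n_odd -e vn.
      by case: (2 * p <= n) => /=; rewrite add0n.
    have -> : (2 * p + 1 \in M) = true by rewrite -e.
    case sM: (2 * p \in M); first by have := hs _ sM; lia.
    have -> : (2 * p <= n) by lia.
    by case: (2 * p + 1 <= n) => /=; rewrite addn0.
  have := SP_update p1 pM M0; rewrite -addnA hch => hup.
  rewrite case_aE // mem_rcons in_cons.
  have -> : (p %/ 2 == p) = false by lia.
  rewrite /= /topv in hup; rewrite pM /= in hup.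
  have hm : ht p = (ht v).+1 by lia.
  move: hup; case pp: (p %/ 2 \in M) => /= hup.
    rewrite huc_iff; last lia.
    have -> : ((2 * p <= n) && (2 * p \notin rcons M p)) || ((2 * p + 1 <= n) && (2 * p + 1 \notin rcons M p)) = true.
      move: hch; rewrite /chv; case: ifP => //; case: ifP => //.
      move=> _ _; have := Pf_gt0 (ht v); lia.
    rewrite hm /= in hup *.
    have := PfS (ht v); have := PfE (ht v); lia.
  rewrite hm QfS; lia.
have hI' : forall u, I2 (rcons M u) u.
  move=> u y; rewrite mem_rcons in_cons; case/orP => [/eqP ->|yM y1 yw]; first by move=> _; rewrite eqxx.
  rewrite mem_rcons in_cons; case: (eqVneq y v) => [e|yv]; last by rewrite hI ?orbT.
  by move: ca; rewrite /case_a -e y1 /= => /negbFE ->; rewrite orbT.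
case hu: (has_unmarked_child 3 n M v) => /andP [wc wM].
  move: wc; rewrite child3 // => /and3P [w1 w2 wn].
  have w2' : 2 <= w by lia.
  have wv : w %/ 2 = v by lia.
  split => //; first lia.
  have hc : forall c, c %/ 2 = w -> 2 <= c -> c \notin rcons M w.
    move=> c cw c2; rewrite mem_rcons in_cons negb_or; apply/andP; split; first lia.
    apply/negP => cM; have c1 : c != 1 by lia.
    have cv : c != v by lia.
    by move: (hI _ cM c1 cv); rewrite parent3 // cw (negbTE wM).
  have e1 : (2 * w \notin rcons M w) = true by apply: hc; lia.
  have e2 : (2 * w + 1 \notin rcons M w) = true by apply: hc; lia.
  have wr : 1 <= w <= n by lia.
  have := SP_update wr wM M0; rewrite /chv e1 e2 !andbT.
  have w1' : 1 <= w by lia.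
  have [hc1 hc2] := ht_child w1'; rewrite hc1 hc2.
  have hv0 : 0 < ht v by rewrite ht_pos; lia.
  have hw : ht w = (ht v).-1.
    have [hv1 hv2] := ht_child v1.
    have [e|e] : w = 2 * v \/ w = 2 * v + 1 by lia.
      by rewrite e.
    by rewrite e.
  rewrite /topv wM wv hvM /= => hup.
  rewrite case_aE // mem_rcons in_cons wv.
  have -> : (v == w) = false by lia.
  rewrite hvM /= huc_iff // e1 e2 !andbT -n_odd.
  have ev : (ht v).-1 = ht w by lia.
  rewrite ev.
  move: hup; rewrite -n_odd; case hh: (2 * w <= n) => hup.
    have hw0 : 0 < ht w by rewrite ht_pos.
    have [m em] : exists m, ht w = m.+1 by exists (ht w).-1; lia.
    rewrite em /= in hup *.
    have := PfS m; have := PfE m; have := DfS m; lia.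
  have hw0 : ht w = 0 by move: hh; rewrite -ht_pos //; lia.
  rewrite hw0 in hup *; move: hup; rewrite /Pf /= /Df /=; lia.
move: wc => /and3P [wv1 wn1 hnc].
have hh : (2 * w <= n) = false.
  apply/negP => h2; move/negP: hnc; apply; apply/hasP; exists (2 * w).
    by rewrite mem_iota; move: wv1; rewrite /is_vertex; lia.
  by rewrite child3; [apply/and3P; split; lia | move: wv1; rewrite /is_vertex; lia].
have wr : 1 <= w <= n by move: wv1; rewrite /is_vertex; lia.
have w2 : 2 <= w by lia.
have hw0 : ht w = 0 by move: hh; rewrite -ht_pos //; lia.
split => //.
have := SP_update wr wM M0; rewrite /chv -n_odd hh /= /topv wM /=.
rewrite case_aE // mem_rcons in_cons huc_iff; last lia.
rewrite -n_odd hh /=.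
have -> : (w %/ 2 == w) = false by lia.
rewrite /= hw0.
case: (w %/ 2 \in M) => /= hup.
  by move: hup; rewrite /Pf /= /Df /=; lia.
rewrite /=; lia.
Qed.


Lemma SP_full M : (forall x, 1 <= x <= n -> x \in M) -> SP M = 0.
Proof.
move=> hM; rewrite /SP big1_seq // => x /andP [_]; rewrite mem_iota => hx.
by rewrite /topv hM //; lia.
Qed.

Lemma cval_full M v : 1 <= v <= n -> (forall x, 1 <= x <= n -> x \in M) -> cval M v = 0.
Proof.
move=> hv hM; rewrite /cval.
have -> : case_a 3 M v = false.
  rewrite /case_a; case: (eqVneq v 1) => //= v1.
  by rewrite parent3 ?hM //; lia.
rewrite huc_iff; last lia.
case: (leqP (2 * v) n) => h.
  have a : 2 * v \in M by apply: hM; lia.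
  have b : 2 * v + 1 \in M by apply: hM; rewrite -n_odd; lia.
  by rewrite a b !andbF.
by have -> : (2 * v + 1 <= n) = false by lia.
Qed.

Lemma main_count vs : is_execution 3 n vs -> num_jumps 3 n vs = Qf k.
Proof.
move=> [hs h0 hstep].
have n3 : 3 <= n.
  rewrite hn expnS; have : 2 <= 2 ^ k by rewrite -{1}(expn1 2) leq_exp2l.
  lia.
set J := fun t => count (fun j => is_jump_step 3 n (take j.+1 vs) (nth 0 vs j)) (iota 0 t).
have inv : forall t, t <= n.-1 ->
  [/\ uniq (take t.+1 vs), (forall y, y \in take t.+1 vs -> 1 <= y <= n),
      1 \in take t.+1 vs, nth 0 vs t \in take t.+1 vs &
      (I2 (take t.+1 vs) (nth 0 vs t) /\
      SP (take t.+1 vs) + J t = Qf k + cval (take t.+1 vs) (nth 0 vs t))].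
  elim=> [_|t IH ht].
    have e1 : take 1 vs = [:: 1].
      by rewrite (take_nth 0 (_ : 0 < size vs)) ?take0 ?h0 // hs; lia.
    rewrite e1 h0.
    split => //.
    - by move=> y; rewrite inE => /eqP ->; lia.
    split; first by move=> y; rewrite inE => /eqP ->; rewrite eqxx.
    have h11 : 1 <= 1 <= n by lia.
    have hu := SP_update h11 (isT : 1 \notin [::]) (isT : 0 \notin [::]).
    have sp0 : SP [::] = 0 by rewrite /SP big1_seq.
    move: hu; rewrite sp0 (_ : topv [::] 1 = 0) //.
    have n2 : (2 <= n) = true by lia.
    have n3' : (2 * 1 + 1 <= n) = true by lia.
    have [c1 c2] := ht_child (isT : 1 <= 1).
    rewrite /chv c1 c2 n3' (_ : 2 * 1 = 2) // n2 /= => hu.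
    rewrite /cval /case_a /= huc_iff // n3' (_ : 2 * 1 = 2) // n2 /=.
    have -> : J 0 = 0 by [].
    have h1k : ht 1 = k by rewrite /ht trunc_log1 subn0.
    move: hu; rewrite h1k.
    have [m em] : exists m, k = m.+1 by exists k.-1; lia.
    rewrite em succnK QfS !PfE => hu; lia.
  have [IU IR I1 IV [II IE]] := IH (ltnW ht).
  have tn : t.+1 < size vs by rewrite hs; lia.
  have tlt : t < n.-1 by lia.
  have := step I1 IV IR II (hstep t tlt).
  rewrite -(take_nth 0 tn) => -[wM wr wI weq].
  have IR' : forall y, y \in take t.+2 vs -> 1 <= y <= n.
    by move=> y; rewrite (take_nth 0 tn) mem_rcons in_cons => /orP [/eqP ->|/IR].
  split => //.
  - by rewrite (take_nth 0 tn) rcons_uniq wM.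
  - by rewrite (take_nth 0 tn) mem_rcons in_cons I1 orbT.
  - by rewrite (take_nth 0 tn) mem_rcons in_cons eqxx.
  split => //.
  have -> : J t.+1 = J t + is_jump_step 3 n (take t.+1 vs) (nth 0 vs t).
    have e : iota 0 t.+1 = iota 0 t ++ [:: t] by rewrite -addn1 iotaD.
    by rewrite /J e count_cat /= addn0.
  lia.
have [IU IR I1 IV [II IE]] := inv n.-1 (leqnn _).
have tk : n.-1.+1 = size vs by rewrite hs; lia.
rewrite tk take_size in IU IR I1 IV II IE.
have cov : forall x, 1 <= x <= n -> x \in vs.
  have := uniq_min_size IU (_ : {subset vs <= iota 1 n}) (_ : size (iota 1 n) <= size vs).
  case; [ by move=> y /IR; rewrite mem_iota; lia | by rewrite size_iota hs | ].
  by move=> _ e x hx; rewrite e mem_iota; lia.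
rewrite SP_full // cval_full // ?addn0 in IE; last exact: IR.
by move: IE; rewrite add0n => IE; exact: IE.
Qed.

End S.

Lemma Pf_f (f : nat -> nat) (hf0 : f 0 = 0)
    (hfS : forall m, 1 <= m -> f m = 2 * (m - 1) + 2 * \sum_(0 <= i < m - 1) f i) :
  forall m, Pf m = f m + 1 /\ Qf m = \sum_(0 <= i < m) f i + m.
Proof.
elim=> [|m [IH1 IH2]]; first by rewrite hf0 big_geq.
have Q1 : Qf m.+1 = \sum_(0 <= i < m.+1) f i + m.+1.
  by rewrite QfS big_nat_recr //= IH1 IH2; lia.
split=> //.
rewrite PfS hfS // subn1 /= IH2; lia.
Qed.

Lemma Qf_closed m : 3 * Qf m + Df m = 2 ^ m.+1 - 1.
Proof.
elim: m => [|m IH]; first by [].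
have := DfS m; rewrite /= expnS -/(Df m); move: IH; rewrite expnS.
have : 1 <= 2 ^ m by rewrite expn_gt0.
rewrite /Df /=; lia.
Qed.

Theorem mainTheorem5 (k n : nat) (f : nat -> nat)
    (hk : 1 <= k) (hn : n = 2 ^ k.+1 - 1)
    (hf0 : f 0 = 0)
    (hfS : forall m, 1 <= m -> f m = 2 * (m - 1) + 2 * \sum_(0 <= i < m - 1) f i) :
  forall vs : seq nat, is_execution 3 n vs ->
    [/\ num_jumps 3 n vs = \sum_(0 <= i < k) f i + k,
        2 * num_jumps 3 n vs = f k.+1
      & num_jumps 3 n vs = n %/ 3].
Proof.
move=> vs hv.
have hq := main_count hk hn hv.
have [_ hQ] := Pf_f hf0 hfS k.
have [hP _] := Pf_f hf0 hfS k.+1.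
have hc := Qf_closed k.
rewrite hq; split.
- exact: hQ.
- move: hP; rewrite PfS; lia.
- rewrite hn -hc; have : Df k <= 1 by rewrite /Df; case: odd.
  lia.
Qed.
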